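(* Let $(W,S)$ be a finitely generated Coxeter system and $u\le v$ in $(W,\le)$. The Möbius function of $(W,\le)$ satisfies $$\mu(u,v)=\begin{cases}(-1)^{|S(v)|-|S(u)|}&\text{if } S(u)=S(v)\setminus \mathrm{Des}(v^{S(u)})\text{ or } u=v,\\ 0&\text{otherwise.}\end{cases}$$ In particular, for every $v\in W$, $\mu(e,v)=(-1)^{|S(v)|}$ if $W_{S(v)}$ is finite and $v=w_0(S(v))$, and $\mu(e,v)=0$ otherwise.
   Context: $(W,S)$ is a finitely generated Coxeter system with length function $\ell$ and identity $e$. For $w\in W$, $S(w)\subseteq S$ is the set of simple reflections appearing in a (any) reduced expression of $w$; $\mathrm{Des}(w)=\{s\in S:\ell(ws)<\ell(w)\}$. For $I\subseteq S$, $W_I$ is the parabolic subgroup generated by $I$, $X_I=\{u\in W:\ell(us)>\ell(u)\ \forall s\in I\}$, and every $w\in W$ factors uniquely as $w=w^Iw_I$ with $w^I\in X_I$, $w_I\in W_I$ (parabolic components along $I$). The partial order on $W$: $u\le v$ if and only if $v_{S(u)}=u$. For $K\subseteq S$ with $W_K$ finite, $w_0(K)$ denotes the unique element of maximal length in $W_K$. *)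

(* Defs.v *)
From HB Require Import structures.
From mathcomp Require Import all_boot all_order all_algebra.
From mathcomp Require Import boolp.
From Stdlib Require Import ClassicalEpsilon.
From Stdlib Require List.

Set Implicit Arguments.
Unset Strict Implicit.
Unset Printing Implicit Defensive.

Import GRing.Theory.
Local Open Scope ring_scope.

Record group := Group {
  gcar :> Type;
  gmul : gcar -> gcar -> gcar;
  gone : gcar;
  ginv : gcar -> gcar;
  gmulA : forall x y z, gmul x (gmul y z) = gmul (gmul x y) z;
  gmul1g : forall x, gmul gone x = x;
  gmulVg : forall x, gmul (ginv x) x = gone
}.

Fixpoint gpow (G : group) (x : G) (n : nat) : G :=
  match n with 0 => gone G | S k => gmul x (gpow x k) end.

Definition group_hom (G H : group) (phi : G -> H) : Prop :=
  forall x y, phi (gmul x y) = gmul (phi x) (phi y).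

Section Coxeter.
Variables (T : finType) (W : group) (gen : T -> W).
(* The set of simple reflections S is the image of the injective map gen;
   subsets of S are represented by {set T}. *)

Definition prodw (ws : seq T) : W :=
  foldr (fun s acc => gmul (gen s) acc) (gone W) ws.

(* (W,S) is a Coxeter system: S consists of distinct involutions generating W,
   and W has the presentation <S | (st)^{m(s,t)} = 1>, where m(s,t) is the
   order of st in W (relations (st)^n = 1 for every n with (st)^n = 1 in W). *)
Definition coxeter_system : Prop :=
  [/\ injective gen,
      (forall s, gmul (gen s) (gen s) = gone W /\ gen s <> gone W),
      (forall w : W, exists ws, prodw ws = w) &
      (forall (G : group) (f : T -> G),
          (forall s t n, gpow (gmul (gen s) (gen t)) n = gone W ->
                         gpow (gmul (f s) (f t)) n = gone G) ->
          exists phi : W -> G, group_hom phi /\ forall s, phi (gen s) = f s)].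

Definition reduced (ws : seq T) : Prop :=
  forall ws', prodw ws' = prodw ws -> (size ws <= size ws')%N.

Definition is_length (w : W) (n : nat) : Prop :=
  exists ws, prodw ws = w /\ reduced ws /\ size ws = n.

Definition len (w : W) : nat := epsilon (inhabits 0%N) (is_length w).

Definition supp (w : W) : {set T} :=
  [set s | `[< exists ws, prodw ws = w /\ reduced ws /\ s \in ws >] ].

Definition Des (w : W) : {set T} :=
  [set s | `[< (len (gmul w (gen s)) < len w)%N >] ].

Definition inW (I : {set T}) (w : W) : Prop :=
  exists ws, all (fun s => s \in I) ws /\ prodw ws = w.

(* minimal coset representatives X_I *)
Definition inX (I : {set T}) (u : W) : Prop :=
  forall s, s \in I -> (len u < len (gmul u (gen s)))%N.

Definition parab (I : {set T}) (w : W) : W * W :=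
  epsilon (inhabits (w, w))
    (fun p => w = gmul p.1 p.2 /\ inX I p.1 /\ inW I p.2).

Definition comp_up (I : {set T}) (w : W) : W := (parab I w).1.
Definition comp_low (I : {set T}) (w : W) : W := (parab I w).2.

Definition cox_le (u v : W) : Prop := comp_low (supp u) v = u.

(* the Möbius function of (W, <=), characterized by its defining recursion:
   mu(u,u) = 1, mu(u,v) = 0 unless u <= v, and for u < v the interval [u,v]
   is finite and sum_{u <= z <= v} mu(u,z) = 0. *)
Definition is_mobius (mu : W -> W -> int) : Prop :=
  forall u v,
    (u = v -> mu u v = 1) /\
    (~ cox_le u v -> mu u v = 0) /\
    (cox_le u v -> u <> v ->
       exists s : seq W, List.NoDup s /\
         (forall z, List.In z s <-> cox_le u z /\ cox_le z v) /\
         \sum_(z <- s) mu u z = 0).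

Definition mobius : W -> W -> int :=
  epsilon (inhabits (fun _ _ => 0)) is_mobius.

Definition finite_parab (K : {set T}) : Prop :=
  exists s : seq W, forall w, inW K w -> List.In w s.

Definition is_w0 (K : {set T}) (w : W) : Prop :=
  inW K w /\ forall x, inW K x -> (len x <= len w)%N.

End Coxeter.

(* Main.v *)
Require Import Defs.
From HB Require Import structures.
From mathcomp Require Import all_boot all_order all_algebra.
From mathcomp Require Import boolp zify.
From Stdlib Require Import ClassicalEpsilon.
From Stdlib Require List Permutation.

Set Implicit Arguments.
Unset Strict Implicit.
Unset Printing Implicit Defensive.

Section Grp.
Variable G : group.
Local Notation "x ** y" := (gmul x y) (at level 40, left associativity).
Local Notation one := (gone G).

Lemma mulgV_ (x : G) : x ** ginv x = one.
Proof.
have e1 : ginv (ginv x) ** ginv x = one by rewrite gmulVg.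
rewrite -[x ** _]gmul1g -e1 -gmulA (gmulA (ginv x)) gmulVg gmul1g e1 //.
Qed.

Lemma mulg1_ (x : G) : x ** one = x.
Proof. by rewrite -(gmulVg x) gmulA mulgV_ gmul1g. Qed.

Lemma mulgKl (x y : G) : ginv x ** (x ** y) = y.
Proof. by rewrite gmulA gmulVg gmul1g. Qed.

Lemma mulgKr (x y : G) : x ** (ginv x ** y) = y.
Proof. by rewrite gmulA mulgV_ gmul1g. Qed.

Lemma mulgKr' (x y : G) : x ** y ** ginv y = x.
Proof. by rewrite -gmulA mulgV_ mulg1_. Qed.

Lemma mulgKl' (x y : G) : x ** ginv y ** y = x.
Proof. by rewrite -gmulA gmulVg mulg1_. Qed.

Lemma mulg_injl (x y z : G) : x ** y = x ** z -> y = z.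
Proof. by move=> h; rewrite -(mulgKl x y) h mulgKl. Qed.

Lemma mulg_injr (x y z : G) : y ** x = z ** x -> y = z.
Proof. by move=> h; rewrite -(mulgKr' y x) h mulgKr'. Qed.

Lemma invg_uniq (x y : G) : x ** y = one -> y = ginv x.
Proof. by move=> h; apply: (@mulg_injl x); rewrite h mulgV_. Qed.

Lemma invgK_ (x : G) : ginv (ginv x) = x.
Proof. by symmetry; apply: invg_uniq; rewrite gmulVg. Qed.

Lemma invgM_ (x y : G) : ginv (x ** y) = ginv y ** ginv x.
Proof. by symmetry; apply: invg_uniq; rewrite -gmulA mulgKr mulgV_. Qed.

Lemma invg1_ : ginv one = one.
Proof. by symmetry; apply: invg_uniq; rewrite gmul1g. Qed.

Lemma gpowD (x : G) m n : gpow x (m + n) = gpow x m ** gpow x n.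
Proof. by elim: m => [|m IH] /=; rewrite ?gmul1g // IH gmulA. Qed.

Lemma gpowS' (x : G) n : gpow x n.+1 = gpow x n ** x.
Proof. by rewrite -addn1 gpowD /= mulg1_. Qed.

Lemma gpow_inv (x : G) n : gpow (ginv x) n = ginv (gpow x n).
Proof.
elim: n => [|n IH] /=; first by rewrite invg1_.
by rewrite IH -invgM_ -gpowS'.
Qed.
End Grp.

Lemma hom1 (G H : group) (phi : G -> H) : group_hom phi -> phi (gone G) = gone H.
Proof.
move=> hp; apply: (@mulg_injl _ (phi (gone G))).
by rewrite -hp gmul1g mulg1_.
Qed.

Lemma homV (G H : group) (phi : G -> H) x : group_hom phi -> phi (ginv x) = ginv (phi x).
Proof.
move=> hp; apply: invg_uniq; by rewrite -hp mulgV_ hom1.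
Qed.

Section PermG.
Variable X : Type.
Record perm := Perm { pf : X -> X; pg : X -> X; pfg : cancel pf pg; pgf : cancel pg pf }.

Lemma perm_ext (p q : perm) : pf p =1 pf q -> p = q.
Proof.
case: p q => f1 g1 c1 d1 [f2 g2 c2 d2] /= e.
have ef : f1 = f2 by apply: funext.
subst f2.
have eg : g1 = g2.
  apply: funext => x; by rewrite -{2}(d1 x) c2.
subst g2.
by rewrite (Prop_irrelevance c1 c2) (Prop_irrelevance d1 d2).
Qed.

Definition pmul (p q : perm) : perm.
refine (@Perm (pf p \o pf q) (pg q \o pg p) _ _).
- by move=> x /=; rewrite pfg pfg.
- by move=> x /=; rewrite pgf pgf.
Defined.
Definition pone : perm := @Perm id id (fun _ => erefl) (fun _ => erefl).
Definition pinv (p : perm) : perm := @Perm (pg p) (pf p) (pgf p) (pfg p).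

Definition permG : group.
refine (@Defs.Group perm pmul pone pinv _ _ _).
- by move=> x y z; apply: perm_ext.
- by move=> x; apply: perm_ext.
- by move=> x; apply: perm_ext => y /=; rewrite pfg.
Defined.

Lemma gpow_pf (p : permG) n x : pf (gpow p n) x = iter n (pf p) x.
Proof. by elim: n => //= n <-. Qed.
End PermG.

Import GRing.Theory.
Section Comb.
Variable T : finType.
Implicit Types C I J K L M N V : {set T}.
Local Open Scope ring_scope.

Definition tog (t : T) J := if t \in J then J :\ t else t |: J.

Lemma togK t : involutive (tog t).
Proof.
move=> J; rewrite {2}/tog; case: ifP => h; rewrite /tog.
  by rewrite setD11 setD1K.
by rewrite setU11 setU1K // h.
Qed.

Lemma in_tog t J y : (y \in tog t J) = (if y == t then t \notin J else y \in J).
Proof.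
rewrite /tog; case: ifP => h; rewrite !inE; case: eqP => [->|] //=; by rewrite h.
Qed.

Lemma sign_tog t J : (-1) ^+ #|tog t J| = - ((-1) ^+ #|J|) :> int.
Proof.
rewrite /tog; case: ifP => h.
  by rewrite [in RHS](cardsD1 t J) h add1n exprS mulN1r opprK.
by rewrite cardsU1 h add1n exprS mulN1r.
Qed.

Lemma tog_setD t J K : t \notin K -> tog t J :\: K = tog t (J :\: K).
Proof.
move=> hK; apply/setP => y; rewrite !inE !in_tog !inE.
case: eqP => [->|] //=; rewrite (negbTE hK) //=.
Qed.

Lemma toggle_zero (P : pred {set T}) (f : {set T} -> int) t :
  (forall J, P (tog t J) = P J) -> (forall J, P J -> f (tog t J) = - f J) ->
  \sum_(J | P J) f J = 0.
Proof.
move=> hP hf.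
have e : \sum_(J | P J) f J = \sum_(J | P J) - f J.
  rewrite (reindex_inj (can_inj (togK t))) /=.
  by apply: eq_big => J; rewrite ?hP // => hJ; rewrite hf.
move: e; rewrite sumrN; set S := \sum_(J | P J) f J => e.
lia.
Qed.

Lemma sum_subsets C : \sum_(N : {set T} | N \subset C) (-1) ^+ #|N| = (C == set0)%:R :> int.
Proof.
case: (set_0Vmem C) => [->|[t ht]].
  rewrite eqxx (eq_bigl (pred1 set0)); last by move=> N; rewrite subset0.
  by rewrite big_pred1_eq cards0.
have -> : (C == set0) = false by apply/negP => /eqP e; rewrite e inE in ht.
apply: (toggle_zero (t := t)); last by move=> J _; exact: sign_tog.
move=> J; apply/subsetP/subsetP => h y.
  move=> hy; case: (eqVneq y t) => [->//|ne].
  by apply: h; rewrite in_tog (negbTE ne).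
rewrite in_tog; case: eqP => [->//|_]; exact: h.
Qed.

Lemma main_comb K V (D : {set T} -> {set T}) (Dx : {set T}) :
  (forall J N, N \subset J -> K \subset J -> J \subset V ->
      [disjoint N & D J] = [disjoint N & Dx]) ->
  (exists t, [/\ t \in Dx, t \in V & t \notin K]) ->
  \sum_(J : {set T}) (if (K \subset J) && (J \subset V) && (J :\: K \subset D J)
          then (-1) ^+ #|J :\: K| else 0) = 0 :> int.
Proof.
move=> h1 [t [htD htV htK]].
pose H (J N : {set T}) : int := if [&& K \subset J, J \subset V, N \subset J :\: K & [disjoint N & Dx]]
                    then (-1) ^+ (#|J :\: K| + #|N|) else 0.
have stepA : forall J, (if (K \subset J) && (J \subset V) && (J :\: K \subset D J)
          then (-1) ^+ #|J :\: K| else 0) = \sum_(N : {set T}) H J N.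
  move=> J; rewrite /H.
  case hKJ: (K \subset J); case hJV: (J \subset V) => /=; try by rewrite big1.
  set C := (J :\: K) :\: D J.
  have eqc : forall N, (N \subset J :\: K) && [disjoint N & Dx] = (N \subset C).
    move=> N; apply/idP/idP.
      move=> /andP [hN hd]; rewrite -(h1 J N) // in hd; last by apply: subset_trans hN (subsetDl _ _).
      by apply/subsetDP.
    move=> /subsetDP [hN hd]; rewrite hN -(h1 J N) //.
    by apply: subset_trans hN (subsetDl _ _).
  rewrite (eq_bigr (fun N => if N \subset C then (-1) ^+ #|J :\: K| * (-1) ^+ #|N| else 0)); last first.
    by move=> N _; rewrite eqc exprD.
  rewrite -big_mkcond /= -mulr_sumr sum_subsets.
  have -> : (C == set0) = (J :\: K \subset D J) by rewrite setD_eq0.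
  by case: ifP; rewrite ?mulr1 ?mulr0.
rewrite (eq_bigr _ (fun J _ => stepA J)) exchange_big /=.
apply: big1 => N _.
case hd: [disjoint N & Dx]; last first.
  by apply: big1 => J _; rewrite /H hd !andbF.
have htN : t \notin N by apply/negP => htN; move/pred0P: hd => /(_ t); rewrite /= htN htD.
rewrite (bigID (fun J => [&& K \subset J, J \subset V, N \subset J :\: K & [disjoint N & Dx]])) /=.
rewrite [X in _ + X]big1 ?addr0; last by move=> J /negbTE hJ; rewrite /H hJ.
have hP : forall J, [&& K \subset tog t J, tog t J \subset V, N \subset tog t J :\: K & [disjoint N & Dx]]
   = [&& K \subset J, J \subset V, N \subset J :\: K & [disjoint N & Dx]].
  move=> J; rewrite tog_setD //.
  congr andb; first by apply/subsetP/subsetP => h y hy; move: (h y hy); rewrite in_tog;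
    case: eqP => [e|//]; rewrite e in hy; by rewrite hy in htK.
  congr andb; first by apply/subsetP/subsetP => h y; rewrite ?in_tog;
    [move=> hy; case: (eqVneq y t) => [->//|ne]; apply: h; rewrite in_tog (negbTE ne)
    | case: eqP => [->//|_]; exact: h].
  congr andb; apply/subsetP/subsetP => h y hy; move: (h y hy); rewrite in_tog;
    case: eqP => [e|//]; rewrite e in hy; by rewrite hy in htN.
apply: (toggle_zero (t := t)) => // J hJ.
rewrite /H hJ hP hJ tog_setD // !exprD sign_tog mulNr //.
Qed.

End Comb.

Section Comb2.
Variable T : finType.
Implicit Types C I J K L M N V D : {set T}.

Lemma cond_equiv K J D : K \subset J -> [disjoint K & D] -> (K == J :\: D) = (J :\: K \subset D).
Proof.
move=> /subsetP hKJ /pred0P hd; apply/eqP/subsetP => [-> y | h].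
  rewrite !inE negb_and negbK => /andP [/orP [->//|h1] h2]; by rewrite h2 in h1.
apply/setP => y; rewrite !inE; case hyK: (y \in K).
  have := hd y; rewrite /= hyK /= => ->; by rewrite hKJ.
case hyJ: (y \in J); rewrite ?andbF //.
by rewrite (h y) // inE hyK hyJ.
Qed.

Lemma card_diff K J : K \subset J -> (#|J| - #|K| = #|J :\: K|)%N.
Proof. by move=> h; rewrite cardsD (setIidPr h). Qed.
End Comb2.

Lemma In_mem (A : eqType) (x : A) (l : seq A) : List.In x l <-> x \in l.
Proof.
elim: l => [|a l IH] //=; rewrite in_cons; split.
  by case=> [->|/IH ->]; rewrite ?eqxx ?orbT.
by case/orP => [/eqP ->|/IH]; [left|right].
Qed.

Lemma NoDup_map_inj (A : eqType) (B : Type) (f : A -> B) (l : seq A) :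
  uniq l -> {in l &, injective f} -> List.NoDup (map f l).
Proof.
elim: l => [|a l IH] /=; first by constructor.
move=> /andP [ha hl] hinj; constructor.
  move/List.in_map_iff => [b [e hb]].
  have hb' : b \in l by apply/In_mem.
  have : b = a by apply: hinj; rewrite ?in_cons ?eqxx ?hb' ?orbT.
  by move=> eb; rewrite -eb hb' in ha.
apply: IH => // y z hy hz; apply: hinj; by rewrite in_cons ?hy ?hz orbT.
Qed.

Lemma sum_perm (B : Type) (l l' : seq B) (f : B -> int) :
  Permutation.Permutation l l' -> (\sum_(z <- l) f z = \sum_(z <- l') f z)%R.
Proof.
elim => [|a l1 l2 _ IH|a b l1|l1 l2 l3 _ IH1 _ IH2] //.
- by rewrite !big_cons IH.
- by rewrite !big_cons GRing.addrCA.
- by rewrite IH1 IH2.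
Qed.

Lemma sum_none (B : Type) (l : seq B) (v : B) (c : int) :
  ~ List.In v l -> (\sum_(z <- l) (if `[< z = v >] then c else 0) = 0)%R.
Proof.
elim: l => [|a l IH] /=; first by rewrite big_nil.
move=> h; rewrite big_cons IH; last by move=> h'; apply: h; right.
by rewrite asboolF ?GRing.addr0 // => e; apply: h; left.
Qed.

Lemma sum_single (B : Type) (l : seq B) (v : B) (c : int) :
  List.NoDup l -> List.In v l -> (\sum_(z <- l) (if `[< z = v >] then c else 0) = c)%R.
Proof.
elim: l => [|a l IH] //= hn; inversion hn; subst => -[e|hv].
  by subst a; rewrite big_cons (asboolT erefl) sum_none ?GRing.addr0.
rewrite big_cons IH // asboolF ?GRing.add0r // => e; subst a; by apply: H1.
Qed.

Import GRing.Theory.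
Section Cox.
Variables (T : finType) (W : group) (gen : T -> W).
Hypothesis cox : coxeter_system gen.
Local Notation "x ** y" := (gmul x y) (at level 40, left associativity).
Local Notation one := (gone W).
Local Notation prodw := (prodw gen).
Local Notation len := (len gen).
Local Notation reduced := (reduced gen).

Lemma gen_inj : injective gen. Proof. by case: cox. Qed.
Lemma gen2 s : gen s ** gen s = one. Proof. by case: cox => _ h _ _; case: (h s). Qed.
Lemma gen_neq1 s : gen s <> one. Proof. by case: cox => _ h _ _; case: (h s). Qed.
Lemma genV s : ginv (gen s) = gen s.
Proof. by symmetry; apply: invg_uniq; rewrite gen2. Qed.
Lemma gen_words w : exists ws, prodw ws = w. Proof. by case: cox => _ _ h _; apply: h. Qed.

Lemma prodw_nil : prodw [::] = one. Proof. by []. Qed.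
Lemma prodw_cons a ws : prodw (a :: ws) = gen a ** prodw ws. Proof. by []. Qed.
Lemma prodw_cat ws vs : prodw (ws ++ vs) = prodw ws ** prodw vs.
Proof. by elim: ws => [|a ws IH] /=; rewrite ?gmul1g // IH gmulA. Qed.
Lemma prodw_rcons ws a : prodw (rcons ws a) = prodw ws ** gen a.
Proof. by rewrite -cats1 prodw_cat /= mulg1_. Qed.
Lemma prodw_rev ws : prodw (rev ws) = ginv (prodw ws).
Proof.
elim: ws => [|a ws IH] /=; first by rewrite invg1_.
by rewrite rev_cons prodw_rcons IH invgM_ genV.
Qed.

Lemma exists_reduced w : exists ws, prodw ws = w /\ reduced ws.
Proof.
have ex : exists n, `[< exists ws, prodw ws = w /\ size ws = n >].
  by case: (gen_words w) => ws h; exists (size ws); apply/asboolP; exists ws.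
case: (ex_minnP ex) => n /asboolP [ws [h1 h2]] hmin.
exists ws; split => // ws' e; rewrite h2; apply: hmin; apply/asboolP.
by exists ws'; rewrite e.
Qed.

Lemma reduced_size ws vs : reduced ws -> reduced vs -> prodw ws = prodw vs -> size ws = size vs.
Proof. by move=> h1 h2 e; apply/eqP; rewrite eqn_leq h1 // h2. Qed.

Lemma len_spec w : exists ws, prodw ws = w /\ reduced ws /\ size ws = len w.
Proof.
have := @epsilon_spec nat (inhabits 0) (is_length gen w).
case: (exists_reduced w) => ws [h1 h2].
move=> /(_ (ex_intro _ (size ws) (ex_intro _ ws (conj h1 (conj h2 erefl))))).
by [].
Qed.

Lemma len_reduced ws : reduced ws -> len (prodw ws) = size ws.
Proof.
move=> h; case: (len_spec (prodw ws)) => vs [e [r s]].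
by rewrite -s; apply: reduced_size.
Qed.

Lemma len_le ws : len (prodw ws) <= size ws.
Proof. case: (len_spec (prodw ws)) => vs [e [r s]]; rewrite -s; exact: r. Qed.

Lemma reduced_len ws : size ws = len (prodw ws) -> reduced ws.
Proof. move=> h ws' e; rewrite h -e; exact: len_le. Qed.

Lemma len1 : len one = 0.
Proof. apply/eqP; rewrite -leqn0; exact: (len_le [::]). Qed.

Lemma len0 w : len w = 0 -> w = one.
Proof. case: (len_spec w) => ws [<- [_ s]] h; move: s; rewrite h; by case: ws {h}. Qed.

Lemma len_gen s : len (gen s) = 1.
Proof.
apply/eqP; rewrite eqn_leq; have := len_le [:: s]; rewrite /= mulg1_ => -> /=.
rewrite lt0n; apply/eqP => /len0; exact: gen_neq1.
Qed.

Lemma len_mul x y : len (x ** y) <= len x + len y.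
Proof.
case: (len_spec x) => xs [<- [_ <-]]; case: (len_spec y) => ys [<- [_ <-]].
by rewrite -prodw_cat -size_cat len_le.
Qed.

Lemma len_inv x : len (ginv x) = len x.
Proof.
have h : forall x, len (ginv x) <= len x.
  move=> z; case: (len_spec z) => zs [<- [_ <-]].
  by rewrite -prodw_rev -(size_rev zs) len_le.
by apply/eqP; rewrite eqn_leq h /=; rewrite -{1}(invgK_ x) h.
Qed.

Definition boolG : group.
refine (@Defs.Group bool addb false id _ _ _).
- by move=> x y z; rewrite addbA.
- by [].
- by move=> x; rewrite addbb.
Defined.

Lemma sign_hom : exists phi : W -> bool, forall ws, phi (prodw ws) = odd (size ws).
Proof.
case: cox => _ _ _ U.
case: (U boolG (fun _ => true)).
  by move=> s t n _; elim: n => //= n ->.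
move=> phi [hp hs]; exists phi; elim => [|a ws IH] /=.
  exact: (hom1 hp).
by rewrite (hp (gen a)) IH hs.
Qed.

Lemma parity ws vs : prodw ws = prodw vs -> odd (size ws) = odd (size vs).
Proof. by case: sign_hom => phi h e; rewrite -!h e. Qed.

Lemma len_parity ws : odd (len (prodw ws)) = odd (size ws).
Proof. by case: (len_spec (prodw ws)) => vs [e [_ <-]]; apply: parity. Qed.

Lemma len_mulg_gen w s : len (w ** gen s) = (len w).+1 \/ (len (w ** gen s)).+1 = len w.
Proof.
case: (len_spec w) => ws [<- [r s0]].
have p := len_parity (rcons ws s).
rewrite prodw_rcons size_rcons /= s0 in p.
have h1 : len (prodw ws ** gen s) <= (len (prodw ws)).+1.
  by rewrite -s0 -(size_rcons ws s) -prodw_rcons len_le.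
have h2 : len (prodw ws) <= (len (prodw ws ** gen s)).+1.
  have := len_mul (prodw ws ** gen s) (gen s); by rewrite -gmulA gen2 mulg1_ len_gen addn1.
move: p h1 h2; set a := len _; set b := len _ => p h1 h2.
have ne : a <> b by move=> e; move: p; rewrite e; case: (odd b).
lia.
Qed.


Definition eqb (x y : W) : bool := `[< x = y >].

Lemma eqb_conj (a x y : W) : eqb (a ** x ** ginv a) y = eqb x (ginv a ** y ** a).
Proof.
apply: asbool_equiv_eq; split => [<-|->].
  by rewrite -!gmulA mulgKl gmulVg mulg1_.
by rewrite !gmulA mulgV_ gmul1g mulgKr'.
Qed.

Definition pis (s : T) (x : W * bool) : W * bool :=
  (gen s ** x.1 ** gen s, x.2 (+) eqb x.1 (gen s)).

Lemma pisK s : cancel (pis s) (pis s).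
Proof.
case=> x e; rewrite /pis /=.
have -> : gen s ** (gen s ** x ** gen s) ** gen s = x.
  by rewrite -!gmulA gen2 mulg1_ gmulA gen2 gmul1g.
have -> : eqb (gen s ** x ** gen s) (gen s) = eqb x (gen s).
  have := eqb_conj (gen s) x (gen s); rewrite genV => ->.
  by rewrite -gmulA gen2 mulg1_.
by rewrite -addbA addbb addbF.
Qed.

Definition Pis s : permG (W * bool) := @Perm _ (pis s) (pis s) (pisK s) (pisK s).

Fixpoint Ncnt (ws : seq T) (x : W) : nat :=
  match ws with
  | [::] => 0
  | a :: ws' => eqb x (ginv (prodw ws') ** gen a ** prodw ws') + Ncnt ws' x
  end.

Definition Pi (ws : seq T) : W * bool -> W * bool := foldr (fun a f => pis a \o f) id ws.

Lemma Pi_cat A B x : Pi (A ++ B) x = Pi A (Pi B x).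
Proof. by elim: A => //= a A ->. Qed.

Lemma Pi_formula ws x e :
  Pi ws (x, e) = (prodw ws ** x ** ginv (prodw ws), e (+) odd (Ncnt ws x)).
Proof.
elim: ws => [|a ws IH] /=.
  by rewrite gmul1g invg1_ mulg1_ addbF.
rewrite IH /pis /=; congr pair.
  by rewrite invgM_ genV !gmulA.
rewrite oddD -addbA; congr addb; rewrite addbC; congr addb.
rewrite eqb_conj ?invgK_ ?gmulA; by case: eqb.
Qed.

Lemma rel_check s t n :
  gpow (gen s ** gen t) n = one ->
  gpow (gmul (Pis s : permG _) (Pis t)) n = gone (permG (W * bool)).
Proof.
move=> hn; apply: perm_ext => -[x e] /=.
rewrite gpow_pf /=.
set c := gen s ** gen t.
set d := gen t ** gen s.
have dc : d = ginv c by rewrite /c invgM_ !genV.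
set b := fun m => eqb x (gpow d m ** gen t).
have tc : forall k, gen t ** gpow c k = gpow d k ** gen t.
  elim=> [|k IH] /=; first by rewrite gmul1g mulg1_.
  have tc1 : gen t ** c = d ** gen t by rewrite /c /d gmulA.
  by rewrite gmulA tc1 -gmulA IH gmulA.
have key : forall k, iter k (pis s \o pis t) (x, e) =
   (gpow c k ** x ** gpow d k, e (+) \big[addb/false]_(0 <= m < k.*2) b m).
  elim=> [|k IH]; first by rewrite /= gmul1g mulg1_ big_geq // addbF.
  rewrite iterS IH /= /pis /=.
  have dd : d ** gpow d k = gpow d k ** d by rewrite -[d ** _]/(gpow d k.+1) gpowS'.
  have dk : gpow d k = ginv (gpow c k) by rewrite dc gpow_inv.
  congr pair.
    by rewrite dd /c /d -!gmulA.
  rewrite (_ : k.+1.*2 = (k.*2).+2) //.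
  rewrite big_nat_recr //= big_nat_recr //= -!addbA; congr addb; congr addb.
  have -> : eqb (gpow c k ** x ** gpow d k) (gen t) = b (k.*2).
    rewrite dk eqb_conj /b -dk.
    by rewrite -gmulA tc gmulA -gpowD addnn.
  have -> : eqb (gen t ** (gpow c k ** x ** gpow d k) ** gen t) (gen s) = b (k.*2).+1.
    have -> : gen t ** (gpow c k ** x ** gpow d k) ** gen t
       = (gen t ** gpow c k) ** x ** ginv (gen t ** gpow c k).
      by rewrite invgM_ genV -dk !gmulA.
    rewrite eqb_conj /b invgM_ genV -dk tc.
    have e1 : gpow d k ** gen t ** gen s ** (gpow d k ** gen t)
        = gpow d k ** d ** gpow d k ** gen t by rewrite /d !gmulA.
    by rewrite e1 -dd -addnn -addSn gpowD.
  by [].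
rewrite key hn.
have dn : gpow d n = one by rewrite dc gpow_inv hn invg1_.
rewrite dn gmul1g mulg1_; congr pair.
have -> : \big[addb/false]_(0 <= m < n.*2) b m = false; last by rewrite addbF.
rewrite -addnn (@big_cat_nat _ _ _ n 0 (n + n)) //=; last by rewrite leq_addr.
have -> : \big[addb/false]_(n <= i < n + n) b i = \big[addb/false]_(0 <= i < n) b (i + n).
  by have := big_addn 0 (n + n) n xpredT b; rewrite add0n addnK.
have -> : \big[addb/false]_(0 <= i < n) b (i + n) = \big[addb/false]_(0 <= i < n) b i.
  by apply: eq_bigr => i _; rewrite /b gpowD dn mulg1_.
by rewrite addbb.
Qed.

Lemma Pi_word ws vs : prodw ws = prodw vs -> Pi ws =1 Pi vs.
Proof.
case: cox => _ _ _ U.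
case: (U (permG (W * bool)) Pis).
  by move=> s t n; apply: rel_check.
move=> phi [hp hs].
have h : forall us, Pi us =1 pf (phi (prodw us)).
  elim=> [|a us IH] /=.
    by move=> y; rewrite (hom1 hp).
  move=> y; rewrite (hp (gen a)) /= hs /= IH //.
by move=> e y; rewrite !h e.
Qed.

Lemma Ncnt_parity ws vs x : prodw ws = prodw vs -> odd (Ncnt ws x) = odd (Ncnt vs x).
Proof.
move=> e; have := Pi_word e (x, false); rewrite !Pi_formula /=.
by case.
Qed.


Definition del (i : nat) (ws : seq T) := take i ws ++ drop i.+1 ws.

Lemma del_cons i a ws : del i.+1 (a :: ws) = a :: del i ws.
Proof. by []. Qed.
Lemma del0 a ws : del 0 (a :: ws) = ws.
Proof. by rewrite /del /= drop0. Qed.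

Lemma size_del i ws : i < size ws -> size (del i ws) = (size ws).-1.
Proof.
elim: ws i => [|a ws IH] [|i] // h; first by rewrite del0.
by rewrite del_cons /= IH //; move: h => /=; case: (size ws).
Qed.

Lemma del_sub i ws : {subset del i ws <= ws}.
Proof.
move=> x; rewrite /del mem_cat => /orP [h|h].
  exact: mem_take h.
exact: mem_drop h.
Qed.

Lemma del_cat i ws vs : del i (ws ++ vs) =
  if i < size ws then del i ws ++ vs else ws ++ del (i - size ws) vs.
Proof.
elim: ws i => [|a ws IH] [|i] //.
- by rewrite cat_cons !del0.
- by rewrite cat_cons !del_cons IH /= ltnS subSS; case: ifP.
Qed.

Lemma Ncnt_pos ws x : 0 < Ncnt ws x ->
  exists2 i, i < size ws & prodw ws ** x = prodw (del i ws).
Proof.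
elim: ws => [|a ws IH] //=.
case E: (eqb x _) => /= h.
  exists 0 => //; rewrite del0; move/asboolP: E => ->.
  by rewrite !gmulA mulgKr' gen2 gmul1g.
case: (IH h) => i hi e; exists i.+1 => //.
by rewrite del_cons /= -gmulA e.
Qed.

Lemma Ncnt_cat A B x :
  Ncnt (A ++ B) x = Ncnt A (prodw B ** x ** ginv (prodw B)) + Ncnt B x.
Proof.
elim: A => [|a A IH] //=.
rewrite IH addnA; congr (_ + _ + _).
rewrite prodw_cat eqb_conj; congr (nat_of_bool (eqb _ _)).
by rewrite invgM_ -!gmulA.
Qed.

Definition isrefl (r : W) := exists a s, r = a ** gen s ** ginv a.

Lemma refl2 r : isrefl r -> r ** r = one.
Proof.
case=> a [s ->].
by rewrite -!gmulA mulgKl (gmulA (gen s)) gen2 gmul1g mulgV_.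
Qed.

Lemma reflV r : isrefl r -> ginv r = r.
Proof. by move=> h; symmetry; apply: invg_uniq; rewrite refl2. Qed.

Lemma refl_gen s : isrefl (gen s).
Proof. by exists one, s; rewrite gmul1g invg1_ mulg1_. Qed.

Lemma refl_conj a r : isrefl r -> isrefl (a ** r ** ginv a).
Proof.
case=> b [s ->]; exists (a ** b), s.
by rewrite invgM_ !gmulA.
Qed.

Lemma refl_word r : isrefl r ->
  exists R, prodw R = r /\ odd (size R) /\ odd (Ncnt R r).
Proof.
case=> a [s ->].
case: (gen_words a) => A eA.
exists (A ++ s :: rev A); split.
  by rewrite prodw_cat /= prodw_rev eA gmulA.
split.
  by rewrite size_cat /= size_rev addnS /= addnn odd_double.
have key : forall e, Pi A (Pi (rev A) (a ** gen s ** ginv a, e)) = (a ** gen s ** ginv a, e).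
  move=> e; have h : prodw (A ++ rev A) = prodw [::] by rewrite prodw_cat prodw_rev mulgV_.
  have := Pi_word h (a ** gen s ** ginv a, e).
  by rewrite Pi_cat.
have h1 := key false.
rewrite !Pi_formula /= in h1.
rewrite prodw_rev eA invgK_ in h1.
have e1 : ginv a ** (a ** gen s ** ginv a) ** a = gen s.
  by rewrite !gmulA gmulVg gmul1g mulgKl'.
case: h1 => h1.
have c1 : prodw (s :: rev A) ** (a ** gen s ** ginv a) ** ginv (prodw (s :: rev A)) = gen s.
  rewrite /= prodw_rev eA invgM_ invgK_ genV !gmulA mulgKl' mulgKl'.
  by rewrite gen2 gmul1g.
have c2 : eqb (a ** gen s ** ginv a) (ginv (prodw (rev A)) ** gen s ** prodw (rev A)) = true.
  by apply/asboolP; rewrite prodw_rev eA invgK_.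
rewrite Ncnt_cat c1 /= c2 !oddD /=.
move: h1.
move=> _; rewrite e1; by case: (odd _); case: (odd _).
Qed.

Lemma strong_exchange r w ws : isrefl r -> len (w ** r) < len w ->
  prodw ws = w -> reduced ws ->
  exists2 i, i < size ws & w ** r = prodw (del i ws).
Proof.
move=> hr hl ew rw.
suff : odd (Ncnt ws r).
  case E: (Ncnt ws r) => [|n] //= _.
  by rewrite -ew; apply: Ncnt_pos; rewrite E.
case: (len_spec (w ** r)) => vs [ev [rv sv]].
case: (refl_word hr) => R [eR [_ oR]].
have e : prodw ws = prodw (vs ++ R) by rewrite prodw_cat ev eR -gmulA refl2 // mulg1_.
rewrite (Ncnt_parity _ e) Ncnt_cat oddD eR.
have -> : r ** r ** ginv r = r by rewrite refl2 // gmul1g reflV.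
rewrite oR; case O: (odd (Ncnt vs r)) => //=.
have hp : 0 < Ncnt vs r by case: (Ncnt vs r) O.
case: (Ncnt_pos hp) => i hi ei.
exfalso.
rewrite ev -gmulA refl2 // mulg1_ in ei.
have := len_le (del i vs); rewrite -ei size_del // sv.
move=> h; lia.
Qed.

Lemma len_mul_parity x y : odd (len (x ** y)) = odd (len x) (+) odd (len y).
Proof.
case: (len_spec x) => xs [<- [_ <-]]; case: (len_spec y) => ys [<- [_ <-]].
by rewrite -prodw_cat len_parity size_cat oddD.
Qed.

Lemma len_refl_odd r : isrefl r -> odd (len r).
Proof. by move=> /refl_word [R [<- [oR _]]]; rewrite len_parity. Qed.

Lemma len_mul_refl_neq x r : isrefl r -> len (x ** r) <> len x.
Proof.
move=> hr e; have := len_mul_parity x r; rewrite e (len_refl_odd hr); by case: (odd (len x)).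
Qed.

Lemma exchange s w ws : len (w ** gen s) < len w -> prodw ws = w -> reduced ws ->
  exists2 i, i < size ws & w ** gen s = prodw (del i ws).
Proof. by move=> h; apply: strong_exchange (refl_gen s) h. Qed.

Local Notation inW := (inW gen).
Local Notation inX := (inX gen).
Local Notation supp := (supp gen).
Local Notation Des := (Des gen).
Local Notation up := (comp_up gen).
Local Notation low := (comp_low gen).
Implicit Types I J K L M N : {set T}.

Lemma reduced_catl ws vs : reduced (ws ++ vs) -> reduced ws.
Proof.
move=> r; apply: reduced_len; apply/eqP; rewrite eqn_leq len_le andbT.
have := len_mul (prodw ws) (prodw vs); rewrite -prodw_cat len_reduced // size_cat.
by move=> h; have := len_le vs; lia.
Qed.

Lemma reduced_catr ws vs : reduced (ws ++ vs) -> reduced vs.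
Proof.
move=> r; apply: reduced_len; apply/eqP; rewrite eqn_leq len_le andbT.
have := len_mul (prodw ws) (prodw vs); rewrite -prodw_cat len_reduced // size_cat.
by move=> h; have := len_le ws; lia.
Qed.

Lemma reduce_word ws : exists vs, prodw vs = prodw ws /\ reduced vs /\ {subset vs <= ws}.
Proof.
elim/last_ind: ws => [|ws a [vs [e [r sub]]]].
  by exists [::].
have sz := len_reduced r; rewrite e in sz.
case: (len_mulg_gen (prodw ws) a) => h.
  exists (rcons vs a); split; first by rewrite !prodw_rcons e.
  split.
    apply: reduced_len; rewrite prodw_rcons e h size_rcons sz //.
  move=> x; rewrite !mem_rcons !in_cons => /orP [->//|/sub ->]; by rewrite orbT.
have hl : len (prodw ws ** gen a) < len (prodw ws) by rewrite -h.
rewrite -e in hl; case: (exchange hl erefl r) => i hi ei.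
exists (del i vs); split; first by rewrite -ei e prodw_rcons.
split.
  apply: reduced_len; rewrite -ei size_del // -(len_reduced r) e -h //.
move=> x /del_sub /sub; rewrite mem_rcons in_cons => ->; by rewrite orbT.
Qed.

Lemma inW_one I : inW I one. Proof. by exists [::]. Qed.
Lemma inW_gen I s : s \in I -> inW I (gen s).
Proof. by move=> h; exists [:: s]; rewrite /= h mulg1_. Qed.
Lemma inW_mul I x y : inW I x -> inW I y -> inW I (x ** y).
Proof.
case=> xs [hx <-] [ys [hy <-]]; exists (xs ++ ys).
by rewrite all_cat hx hy prodw_cat.
Qed.
Lemma inW_inv I x : inW I x -> inW I (ginv x).
Proof. by case=> xs [hx <-]; exists (rev xs); rewrite all_rev hx prodw_rev. Qed.
Lemma inW_mono I J x : I \subset J -> inW I x -> inW J x.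
Proof.
move=> /subsetP sIJ [xs [hx <-]]; exists xs; split => //.
by apply/allP => y /(allP hx) /sIJ.
Qed.

Lemma inW_red I w : inW I w -> exists vs, prodw vs = w /\ reduced vs /\ all (fun s => s \in I) vs.
Proof.
case=> ws [h <-]; case: (reduce_word ws) => vs [e [r sub]]; exists vs; split => //; split => //.
by apply/allP => x /sub /(allP h).
Qed.

Lemma gen_inW I s : inW I (gen s) -> s \in I.
Proof.
case/inW_red => vs [e [r h]].
have := len_reduced r; rewrite e len_gen.
case: vs e r h => [|a [|b vs]] //= e _ h _.
by move: e; rewrite mulg1_ => /gen_inj <-; move: h; rewrite andbT.
Qed.

Lemma inW_letters I ws : inW I (prodw ws) -> reduced ws -> all (fun s => s \in I) ws.
Proof.
elim/last_ind: ws => [|ws a IH] // hw r.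
have r' : reduced ws by apply: (@reduced_catl _ [:: a]); rewrite cats1.
have hl : len (prodw (rcons ws a) ** gen a) < len (prodw (rcons ws a)).
  by rewrite {1}prodw_rcons -gmulA gen2 mulg1_ (len_reduced r) (len_reduced r') size_rcons.
case: (inW_red hw) => vs [e [rv av]].
rewrite -e in hl; case: (exchange hl erefl rv) => i hi ei.
have hi' : inW I (prodw (rcons ws a) ** gen a).
  rewrite -e ei; exists (del i vs); split => //; by apply/allP => x /del_sub /(allP av).
have ha : a \in I.
  apply: gen_inW.
  have -> : gen a = ginv (prodw (rcons ws a)) ** (prodw (rcons ws a) ** gen a) by rewrite mulgKl.
  by apply: inW_mul => //; apply: inW_inv.
rewrite all_rcons ha /=; apply: IH => //.
by move: hi'; rewrite prodw_rcons -gmulA gen2 mulg1_.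
Qed.

Lemma in_supp s w : (s \in supp w) <-> exists ws, prodw ws = w /\ reduced ws /\ s \in ws.
Proof. by rewrite /Defs.supp inE; split => /asboolP. Qed.

Lemma supp_sub I w : inW I w -> supp w \subset I.
Proof.
move=> h; apply/subsetP => s /in_supp [ws [e [r hs]]].
rewrite -e in h; exact: (allP (inW_letters h r)).
Qed.

Lemma inW_supp w : inW (supp w) w.
Proof.
case: (exists_reduced w) => ws [e r]; exists ws; split => //.
by apply/allP => s hs; apply/in_supp; exists ws.
Qed.

Lemma inW_iff I w : inW I w <-> supp w \subset I.
Proof. split; [exact: supp_sub | move=> h; exact: inW_mono h (inW_supp w)]. Qed.

Lemma supp1 : supp one = set0.
Proof.
apply/eqP; rewrite -subset0; apply: supp_sub; exact: inW_one.
Qed.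

Lemma Des_sub_supp w : Des w \subset supp w.
Proof.
apply/subsetP => s; rewrite inE => /asboolP hl.
case: (exists_reduced w) => ws [e r].
case: (exchange hl e r) => i hi ei.
apply: gen_inW.
have -> : gen s = ginv w ** (w ** gen s) by rewrite mulgKl.
apply: inW_mul; first by apply: inW_inv; exact: inW_supp.
rewrite ei; exists (del i ws); split => //.
by apply/allP => x /del_sub hx; apply/in_supp; exists ws.
Qed.

Lemma inDes s w : (s \in Des w) = (len (w ** gen s) < len w).
Proof. by rewrite /Defs.Des inE; apply/asboolP/idP. Qed.

Lemma notDes s w : (s \notin Des w) = (len w < len (w ** gen s)).
Proof.
rewrite inDes; case: (len_mulg_gen w s) => e; rewrite -?e ?e; apply/idP/idP; lia.
Qed.

Lemma inX_iff I x : inX I x <-> [disjoint I & Des x].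
Proof.
split.
  move=> h; apply/pred0P => s /=; apply/andP => -[hs hd].
  by move: (h s hs); rewrite -notDes hd.
move=> /pred0P h s hs; rewrite -notDes; apply/negP => hd.
by move: (h s); rewrite /= hs hd.
Qed.

Definition minc I x := forall z, inW I z -> len x <= len (x ** z).

Lemma exists_minc I w : exists x z, w = x ** z /\ inW I z /\ minc I x.
Proof.
have ex : exists n, `[< exists z, inW I z /\ len (w ** ginv z) = n >].
  by exists (len (w ** ginv one)); apply/asboolP; exists one; split => //; exact: inW_one.
case: (ex_minnP ex) => n /asboolP [z [hz hn]] hmin.
exists (w ** ginv z), z; split; first by rewrite mulgKl'.
split => // y hy; rewrite hn; apply: hmin; apply/asboolP.
exists (ginv y ** z); split.
  by apply: inW_mul => //; exact: inW_inv.
by rewrite invgM_ invgK_ gmulA.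
Qed.

Lemma add_len I x z : minc I x -> inW I z -> len (x ** z) = len x + len z.
Proof.
move=> hx hz; case: (inW_red hz) => zs [ez [rz az]].
rewrite -ez (len_reduced rz) {ez hz}.
elim/last_ind: zs rz az => [|zs s IH] rz az.
  by rewrite /= mulg1_ addn0.
have rz' : reduced zs by apply: (@reduced_catl _ [:: s]); rewrite cats1.
move: az; rewrite all_rcons => /andP [hs az].
have IH' := IH rz' az.
rewrite prodw_rcons gmulA size_rcons addnS -IH'.
case: (len_mulg_gen (x ** prodw zs) s) => // e.
exfalso.
have hl : len (x ** prodw zs ** gen s) < len (x ** prodw zs) by rewrite -e.
case: (len_spec x) => xs [ex [rx sx]].
have rc : reduced (xs ++ zs).
  by apply: reduced_len; rewrite prodw_cat ex IH' size_cat sx.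
have ec : prodw (xs ++ zs) = x ** prodw zs by rewrite prodw_cat ex.
case: (exchange hl ec rc) => i hi ei.
move: ei; rewrite del_cat; case: ifP => hix ei.
-
  have ex' : prodw (del i xs) = x ** (prodw zs ** gen s ** ginv (prodw zs)).
    by rewrite !gmulA ei prodw_cat mulgKr'.
  have hin : inW I (prodw zs ** gen s ** ginv (prodw zs)).
    apply: inW_mul; last by apply: inW_inv; exists zs.
    by apply: inW_mul; [exists zs | exact: inW_gen].
  have := hx _ hin; rewrite -ex' => h.
  have := len_le (del i xs); rewrite size_del // => h2.
  lia.
-
  have ez : prodw zs ** gen s = prodw (del (i - size xs) zs).
    by apply: (@mulg_injl _ x); rewrite gmulA ei prodw_cat ex.
  have hi' : i - size xs < size zs by rewrite size_cat in hi; lia.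
  have := len_le (del (i - size xs) zs); rewrite -ez size_del //.
  rewrite -prodw_rcons (len_reduced rz) size_rcons; lia.
Qed.

Lemma minc_inX I x : minc I x -> inX I x.
Proof.
move=> h s hs; have := h _ (inW_gen hs).
case: (len_mulg_gen x s) => e; lia.
Qed.

Lemma inX_minc I x : inX I x -> minc I x.
Proof.
move=> hx.
case: (exists_minc I x) => u [v [e [hv hu]]].
have lv : len v = 0.
  case: (inW_red hv) => vs [ev [rv av]].
  move: ev rv av; elim/last_ind: vs => [|vs s _] ev rv av.
    by rewrite -ev len1.
  exfalso.
  move: av; rewrite all_rcons => /andP [hs av].
  have l1 : len (u ** prodw (rcons vs s)) = len u + size (rcons vs s).
    by rewrite (add_len hu) ?(len_reduced rv) // ev.
  have l2 : u ** prodw (rcons vs s) ** gen s = u ** prodw vs.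
    by rewrite prodw_rcons -!gmulA gen2 mulg1_.
  have := hx s hs; rewrite e -ev l2 l1.
  have := len_mul u (prodw vs); have := len_le vs; rewrite size_rcons; lia.
have ev : v = one by apply: len0.
by move=> z hz; rewrite e ev mulg1_; apply: hu.
Qed.

Lemma inX1 I : inX I one.
Proof. by move=> s _; rewrite gmul1g len1 len_gen. Qed.

Lemma parab_spec I w : w = up I w ** low I w /\ inX I (up I w) /\ inW I (low I w).
Proof.
rewrite /comp_up /comp_low /parab.
apply: (@epsilon_spec _ (inhabits (w, w)) (fun p => w = gmul p.1 p.2 /\ inX I p.1 /\ inW I p.2)).
case: (exists_minc I w) => x [z [e [hz hx]]].
by exists (x, z); split => //; split => //; apply: minc_inX.
Qed.

Lemma mul_uniq I x z x' z' : x ** z = x' ** z' -> inX I x -> inW I z -> inX I x' -> inW I z' ->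
  x = x' /\ z = z'.
Proof.
move=> e hx hz hx' hz'.
have e1 : x' = x ** (z ** ginv z') by rewrite gmulA e mulgKr'.
have e2 : x = x' ** (z' ** ginv z) by rewrite gmulA -e mulgKr'.
have l1 : len x' = len x + len (z ** ginv z').
  by rewrite {1}e1 (add_len (inX_minc hx)) //; apply: inW_mul => //; exact: inW_inv.
have l2 : len x = len x' + len (z' ** ginv z).
  by rewrite {1}e2 (add_len (inX_minc hx')) //; apply: inW_mul => //; exact: inW_inv.
have l0 : len (z ** ginv z') = 0 by lia.
have ez : z = z' by rewrite -(mulgKl' z z') (len0 l0) gmul1g.
by split => //; rewrite e1 ez mulgV_ mulg1_.
Qed.

Lemma parab_uniq I w x z : w = x ** z -> inX I x -> inW I z -> up I w = x /\ low I w = z.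
Proof.
move=> e hx hz; case: (parab_spec I w) => e' [hx' hz'].
apply: (mul_uniq (I := I)) => //; by rewrite -e'.
Qed.

Lemma up_spec I w : inX I (up I w). Proof. by case: (parab_spec I w) => _ []. Qed.
Lemma low_spec I w : inW I (low I w). Proof. by case: (parab_spec I w) => _ []. Qed.
Lemma parab_eq I w : w = up I w ** low I w. Proof. by case: (parab_spec I w). Qed.

Arguments up_spec : clear implicits.
Arguments low_spec : clear implicits.
Arguments parab_eq : clear implicits.
Arguments parab_spec : clear implicits.
Lemma notDes_inX I x s : inX I x -> s \in I -> s \notin Des x.
Proof. by move=> /inX_iff /pred0P h hs; apply/negP => hd; move: (h s); rewrite /= hs hd. Qed.

Lemma low_supp K z : supp (low K z) \subset K :&: supp z.
Proof.
set J := K :&: supp z.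
have hzJ := parab_eq J z.
have hlJ : inW J (low J z) := low_spec J z.
have hlS : inW (supp z) (low J z) by apply: inW_mono hlJ; rewrite subsetIr.
have hxK : inX K (up J z).
  apply/inX_iff/pred0P => s /=; apply/andP => -[hs hd].
  case hsz: (s \in supp z).
    have : s \in J by rewrite inE hs hsz.
    by move=> /(notDes_inX (up_spec J z)); rewrite hd.
  have hin : inW (supp z) (up J z).
    have -> : up J z = z ** ginv (low J z) by rewrite {2}hzJ mulgKr'.
    apply: inW_mul; [exact: inW_supp | exact: inW_inv].
  have := subsetP (supp_sub hin) s (subsetP (Des_sub_supp _) s hd).
  by rewrite hsz.
have [_ ->] := parab_uniq hzJ hxK (inW_mono (subsetIl _ _) hlJ).
exact: supp_sub.
Qed.

Lemma up_supp K z : supp (up K z) \subset supp z.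
Proof.
apply: supp_sub.
have -> : up K z = z ** ginv (low K z) by rewrite {2}(parab_eq K z) mulgKr'.
apply: inW_mul; first exact: inW_supp.
apply: inW_inv; apply/inW_iff; apply: subset_trans (low_supp K z) _; exact: subsetIr.
Qed.

Local Notation cle := (cox_le gen).

Lemma cle_supp u v : cle u v -> supp u \subset supp v.
Proof. rewrite /cox_le => e; rewrite -{1}e; apply: subset_trans (low_supp _ _) _; exact: subsetIr. Qed.

Lemma cle_refl u : cle u u.
Proof.
have [_ h] := @parab_uniq (supp u) u one u (esym (gmul1g u)) (@inX1 _) (inW_supp u).
by rewrite /cox_le h.
Qed.

Lemma cle_eq u v : cle u v -> supp u = supp v -> u = v.
Proof.
rewrite /cox_le => e es; rewrite -e es.
have [_ h] := @parab_uniq (supp v) v one v (esym (gmul1g v)) (@inX1 _) (inW_supp v).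
exact: h.
Qed.

Lemma cle1 v : cle one v.
Proof.
rewrite /cox_le supp1.
have hx : inX set0 v by move=> s; rewrite inE.
have [_ h] := @parab_uniq set0 v v one (esym (mulg1_ v)) hx (inW_one _).
exact: h.
Qed.

Lemma len_split J y s : s \in J -> len (y ** gen s) = len (up J y) + len (low J y ** gen s).
Proof.
move=> hs; rewrite {1}(parab_eq J y) -gmulA (add_len (inX_minc (up_spec J y))) //.
by apply: inW_mul; [exact: low_spec | exact: inW_gen].
Qed.

Lemma len_split0 J y : len y = len (up J y) + len (low J y).
Proof. by rewrite {1}(parab_eq J y) (add_len (inX_minc (up_spec J y))) //; exact: low_spec. Qed.

Lemma inX_low N J y : N \subset J -> inX N (low J y) <-> inX N y.
Proof.
move=> /subsetP hNJ; split => h s hs; move: (h s hs).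
  by rewrite (len_split y (hNJ s hs)) (len_split0 J y) ltn_add2l.
by rewrite (len_split y (hNJ s hs)) (len_split0 J y) ltn_add2l.
Qed.

Lemma cle_decomp u v : cle u v -> v = up (supp u) v ** u.
Proof. by rewrite /cox_le => e; rewrite {1}(parab_eq (supp u) v) e. Qed.

Section Interval.
Variables u v : W.
Hypothesis huv : cle u v.
Let K := supp u.
Let x := up K v.

Lemma hv : v = x ** u. Proof. exact: cle_decomp. Qed.
Lemma hxK : inX K x. Proof. exact: up_spec. Qed.
Lemma huK : inW K u. Proof. exact: inW_supp. Qed.

Lemma lowJ_v J : K \subset J -> low J v = low J x ** u /\ up J v = up J x.
Proof.
move=> hKJ.
have e : v = up J x ** (low J x ** u) by rewrite hv {1}(parab_eq J x) gmulA.
have [h1 h2] := parab_uniq e (up_spec J x) (inW_mul (low_spec J x) (inW_mono hKJ huK)).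
by split.
Qed.

Lemma xJ_inX J : K \subset J -> inX K (low J x).
Proof. by move=> h; apply/(inX_low _ h); exact: hxK. Qed.

Lemma lowJ_parts J : K \subset J -> up K (low J v) = low J x /\ low K (low J v) = u.
Proof.
move=> h; have [e _] := lowJ_v h.
exact: (parab_uniq e (xJ_inX h) huK).
Qed.

Lemma cle_lowJ J : K \subset J -> cle u (low J v).
Proof. by move=> h; rewrite /cox_le; have [_ ->] := lowJ_parts h. Qed.

Lemma supp_lowJ J : K \subset J -> J :\: K \subset Des (low J x) -> supp (low J v) = J.
Proof.
move=> hKJ hD; apply/eqP; rewrite eqEsubset; apply/andP; split.
  by apply: subset_trans (low_supp J v) _; exact: subsetIl.
have [hup hlow] := lowJ_parts hKJ.
apply/subsetP => y hy; case hyK: (y \in K).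
  have : y \in supp (low K (low J v)) by rewrite hlow.
  by move/(subsetP (low_supp _ _)); rewrite inE => /andP [].
have : y \in J :\: K by rewrite inE hyK hy.
move/(subsetP hD)/(subsetP (Des_sub_supp _)); rewrite -hup.
by move/(subsetP (up_supp _ _)).
Qed.

End Interval.

Definition Fm (a z : W) : int :=
  if `[< cle a z >] then
    (if (supp a == supp z :\: Des (up (supp a) z)) || `[< a = z >]
     then (-1) ^+ (#|supp z| - #|supp a|)%N else 0)%R
  else 0%R.

Section Interval2.
Local Open Scope ring_scope.
Variables u v : W.
Hypothesis huv : cle u v.
Let K := supp u.
Let x := up K v.

Lemma Fm_lowJ J : supp (low J v) = J -> cle u (low J v) ->
  Fm u (low J v) = if (K \subset J) && (J \subset supp v) && (J :\: K \subset Des (low J x))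
                   then (-1) ^+ #|J :\: K| else 0.
Proof.
move=> sJ cJ.
have hK : K \subset J by rewrite -sJ; exact: cle_supp.
have hJV : J \subset supp v by rewrite -sJ; apply: subset_trans (low_supp J v) _; exact: subsetIr.
have [hup _] := lowJ_parts huv hK.
rewrite /Fm (asboolT cJ) sJ hK hJV /= -/K hup.
have hd : [disjoint K & Des (low J x)] by apply/inX_iff; exact: xJ_inX.
rewrite (cond_equiv hK hd) (card_diff hK) //.
case: (boolP `[< u = low J v >]) => [/asboolP e|]; last by rewrite orbF.
have eJ : J = K by rewrite -sJ -e.
by rewrite orbT eJ setDv sub0set.
Qed.

Lemma Fm_notP J : ~~ ((supp (low J v) == J) && `[< cle u (low J v) >]) ->
  (if (K \subset J) && (J \subset supp v) && (J :\: K \subset Des (low J x))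
                   then (-1) ^+ #|J :\: K| else 0 : int) = 0.
Proof.
move=> hn; case: ifP => // /andP [/andP [hK _] hD].
exfalso; move/negP: hn; apply; apply/andP; split.
  by apply/eqP; apply: (supp_lowJ huv).
by apply/asboolP; apply: (cle_lowJ huv).
Qed.

Lemma interval_sum : u <> v -> exists s : seq W, List.NoDup s /\
  (forall z, List.In z s <-> cle u z /\ cle z v) /\ \sum_(z <- s) Fm u z = 0.
Proof.
move=> nuv.
set P := fun J : {set T} => (supp (low J v) == J) && `[< cle u (low J v) >].
exists (map (fun J => low J v) [seq J <- index_enum {set T} | P J]).
split.
  apply: NoDup_map_inj; first by rewrite filter_uniq // index_enum_uniq.
  move=> J J'; rewrite !mem_filter => /andP [/andP [/eqP h1 _] _] /andP [/andP [/eqP h2 _] _] e.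
  by rewrite -h1 -h2 e.
split.
  move=> z; rewrite List.in_map_iff; split.
    move=> [J [<- /In_mem]]; rewrite mem_filter => /andP [/andP [/eqP sJ /asboolP cJ] _].
    by split => //; rewrite /cox_le sJ.
  move=> [c1 c2]; exists (supp z); split; first exact: c2.
  apply/In_mem; rewrite mem_filter mem_index_enum andbT /P c2 eqxx /=.
  by apply/asboolP.
rewrite big_map big_filter big_mkcond /=.
rewrite (eq_bigr (fun J => if (K \subset J) && (J \subset supp v) && (J :\: K \subset Des (low J x))
                   then (-1) ^+ #|J :\: K| else 0)); last first.
  move=> J _; case: ifP => hP.
    by move: hP => /andP [/eqP sJ /asboolP cJ]; rewrite Fm_lowJ.
  by rewrite Fm_notP //; apply: negbT.
apply: (main_comb (Dx := Des x)).
  move=> J N hNJ hKJ _; apply/idP/idP => h; apply/inX_iff.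
    by apply/(inX_low _ hNJ); apply/inX_iff.
  by apply/(inX_low _ hNJ)/inX_iff.
have xn1 : x <> one by move=> e; apply: nuv; rewrite (hv huv) -/K -/x e gmul1g.
case: (len_spec x) => xs [ex [rx sx]].
case/lastP: xs ex rx sx => [|xs t] ex rx sx.
  by exfalso; apply: xn1; rewrite -ex.
exists t; split.
- rewrite inDes -ex prodw_rcons -gmulA gen2 mulg1_.
  have := len_le xs; rewrite -prodw_rcons (len_reduced rx) size_rcons; lia.
- apply: (subsetP (up_supp K v)); apply: (subsetP (Des_sub_supp _)).
  rewrite -/x inDes -ex prodw_rcons -gmulA gen2 mulg1_.
  have := len_le xs; rewrite -prodw_rcons (len_reduced rx) size_rcons; lia.
- apply/negP => htK; have := notDes_inX (@hxK u v) htK.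
  rewrite inDes -/K -/x -ex prodw_rcons -gmulA gen2 mulg1_.
  have := len_le xs; rewrite -prodw_rcons (len_reduced rx) size_rcons => h.
  by rewrite ltnNge; apply/negP/negPn; lia.
Qed.

End Interval2.

Lemma Fm_mobius : is_mobius gen Fm.
Proof.
move=> u v; split; [|split].
- move=> <-; rewrite /Fm (asboolT (cle_refl u)) (asboolT erefl) orbT subnn.
  by rewrite GRing.expr0.
- by move=> h; rewrite /Fm asboolF.
- move=> c ne; exact: interval_sum.
Qed.

Lemma sum_eq_In (l : seq W) (f g : W -> int) :
  (forall z, List.In z l -> f z = g z) -> (\sum_(z <- l) f z = \sum_(z <- l) g z)%R.
Proof.
elim: l => [|a l IH] h; first by rewrite !big_nil.
rewrite !big_cons h; last by left.
by rewrite IH // => z hz; apply: h; right.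
Qed.

Lemma mobius_uniq mu1 mu2 : is_mobius gen mu1 -> is_mobius gen mu2 ->
  forall u v, cle u v -> mu1 u v = mu2 u v.
Proof.
move=> h1 h2 u.
suff main : forall n v, #|supp v| < n -> cle u v -> mu1 u v = mu2 u v.
  by move=> v; apply: (main (#|supp v|).+1).
elim=> [//|n IH] v hv c.
case: (pselect (u = v)) => [e|ne].
  by have [a1 _] := h1 u v; have [a2 _] := h2 u v; rewrite a1 // a2.
have [_ [_ /(_ c ne) [s1 [nd1 [m1 z1]]]]] := h1 u v.
have [_ [_ /(_ c ne) [s2 [nd2 [m2 z2]]]]] := h2 u v.
pose g z := if `[< z = v >] then mu1 u v else mu2 u z.
have e1 : (\sum_(z <- s1) mu1 u z = \sum_(z <- s1) g z)%R.
  apply: sum_eq_In => z /m1 [cuz czv]; rewrite /g.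
  case: (pselect (z = v)) => [->|nzv]; first by rewrite asboolT.
  rewrite asboolF //; apply: IH => //.
  have hp : supp z \proper supp v.
    rewrite properEneq cle_supp // andbT; apply/eqP => es; apply: nzv; exact: cle_eq.
  by have := proper_card hp; move: hv; rewrite ltnS => h3 h4; apply: leq_trans h4 h3.
have e2 : (\sum_(z <- s1) g z = \sum_(z <- s2) g z)%R.
  apply: sum_perm; apply: Permutation.NoDup_Permutation => // z.
  by rewrite m1 m2.
have e3 : (\sum_(z <- s2) g z - \sum_(z <- s2) mu2 u z
           = \sum_(z <- s2) (if `[< z = v >] then mu1 u v - mu2 u v else 0))%R.
  rewrite -GRing.sumrB; apply: eq_bigr => z _; rewrite /g.
  case: (pselect (z = v)) => [e|nz]; [subst z; by rewrite asboolT | by rewrite asboolF // GRing.subrr].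
rewrite sum_single // in e3; last by apply/m2; split => //; exact: cle_refl.
by move: e3; rewrite -e2 -e1 z1 z2 GRing.subrr => /eqP; rewrite eq_sym GRing.subr_eq0 => /eqP.
Qed.

Lemma mobius_Fm u v : cle u v -> mobius gen u v = Fm u v.
Proof.
move=> c; apply: mobius_uniq => //; last exact: Fm_mobius.
rewrite /mobius; apply: (@epsilon_spec _ _ (is_mobius gen)).
by exists Fm; exact: Fm_mobius.
Qed.

Inductive bru : W -> W -> Prop :=
| bru_refl y : bru y y
| bru_step y z t : isrefl t -> len y < len (y ** t) -> bru (y ** t) z -> bru y z.

Lemma bru_len y z : bru y z -> len y <= len z.
Proof. by elim=> // a b t _ h _ h2; apply: leq_trans (ltnW h) h2. Qed.

Lemma bru_trans a b c : bru a b -> bru b c -> bru a c.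
Proof. by elim=> // y z t ht hl _ IH hc; apply: bru_step ht hl (IH hc). Qed.

Lemma bru1 y t : isrefl t -> len y < len (y ** t) -> bru y (y ** t).
Proof. by move=> ht hl; apply: bru_step ht hl (bru_refl _). Qed.

Lemma bru_down y s : len (y ** gen s) < len y -> bru (y ** gen s) y.
Proof.
move=> h; have e : y ** gen s ** gen s = y by rewrite -gmulA gen2 mulg1_.
by rewrite -{2}e; apply: bru1; [exact: refl_gen | rewrite e].
Qed.

Lemma Z_one y t s : isrefl t -> len y < len (y ** t) ->
  bru (y ** gen s) (y ** t) \/ bru (y ** gen s) (y ** t ** gen s).
Proof.
move=> ht hl.
case: (len_mulg_gen y s) => hs; last first.
  left; apply: bru_trans (bru_down _) (bru1 ht hl); rewrite -hs //.
case: (pselect (y ** gen s = y ** t)) => [e|ne].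
  by left; rewrite e; exact: bru_refl.
have hrt : isrefl (gen s ** t ** gen s).
  by have := refl_conj (gen s) ht; rewrite genV.
have eq1 : y ** gen s ** (gen s ** t ** gen s) = y ** t ** gen s.
  by rewrite !gmulA -(gmulA y) gen2 mulg1_.
have [lt|gt] : len (y ** gen s) < len (y ** t ** gen s) \/ len (y ** t ** gen s) < len (y ** gen s).
  have := len_mul_refl_neq (x := y ** gen s) hrt; rewrite eq1; lia.
  by right; rewrite -eq1; apply: bru1; rewrite ?eq1.
exfalso.
case: (len_spec y) => ys [ey [ry sy]].
have r2 : reduced (rcons ys s).
  by apply: reduced_len; rewrite prodw_rcons ey size_rcons sy hs.
have e2 : prodw (rcons ys s) = y ** gen s by rewrite prodw_rcons ey.
rewrite -eq1 in gt.
case: (strong_exchange hrt gt e2 r2) => i hi ei.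
rewrite eq1 -cats1 del_cat in ei.
move: ei; case: ifP => hiy ei.
  have : y ** t = prodw (del i ys).
    by apply: (@mulg_injr _ (gen s)); rewrite ei prodw_cat /= mulg1_.
  move=> e3; have := len_le (del i ys); rewrite -e3 size_del // sy; lia.
have hi' : i - size ys = 0 by rewrite size_rcons in hi; lia.
rewrite hi' /= cats0 ey in ei.
apply: ne; by rewrite -{1}ei -gmulA gen2 mulg1_.
Qed.

Lemma Z_lemma y z s : bru y z -> bru (y ** gen s) z \/ bru (y ** gen s) (z ** gen s).
Proof.
elim=> [a|a b t ht hl hb IH].
  by right; exact: bru_refl.
case: (Z_one s ht hl) => [h|h].
  by left; apply: bru_trans h hb.
case: IH => [h2|h2]; [left | right]; exact: bru_trans h h2.
Qed.

Lemma w0_bru K w y : K \subset Des w -> inW K y -> bru y w.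
Proof.
move=> /subsetP hK hy; case: (inW_red hy) => ys [<- [ry ay]] {hy}.
elim/last_ind: ys ry ay => [|ys s IH] ry ay.
  rewrite /=; case: (len_spec w) => ws [<- [rw _]] {hK}.
  elim/last_ind: ws rw => [|ws a IH2] rw; first exact: bru_refl.
  have rw' : reduced ws by apply: (@reduced_catl _ [:: a]); rewrite cats1.
  apply: bru_trans (IH2 rw') _; rewrite prodw_rcons; apply: bru1; first exact: refl_gen.
  by rewrite -prodw_rcons (len_reduced rw) (len_reduced rw') size_rcons.
have rys : reduced ys by apply: (@reduced_catl _ [:: s]); rewrite cats1.
move: ay; rewrite all_rcons => /andP [hs ay].
have := Z_lemma s (IH rys ay); rewrite -prodw_rcons => -[h|h] //.
apply: bru_trans h (bru_down _); by rewrite -inDes hK.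
Qed.

Fixpoint allw (n : nat) : seq (seq T) :=
  if n is n'.+1 then [::] :: [seq a :: w | a <- enum T, w <- allw n'] else [:: [::]].

Lemma allw_mem n ws : size ws <= n -> ws \in allw n.
Proof.
elim: n ws => [|n IH] [|a ws] // h; rewrite /= ?inE //.
apply/orP; right.
apply: (allpairs_f (fun a w => a :: w)); first by rewrite mem_enum.
exact: IH.
Qed.

Lemma part1 u v : cle u v -> mobius gen u v =
  (if (supp u == supp v :\: Des (up (supp u) v)) || `[< u = v >]
   then (-1) ^+ (#|supp v| - #|supp u|)%N else 0)%R.
Proof. by move=> c; rewrite mobius_Fm // /Fm asboolT. Qed.

Lemma part2 v : mobius gen one v =
  (if `[< finite_parab gen (supp v) /\ is_w0 gen (supp v) v >]
   then (-1) ^+ #|supp v| else 0)%R.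
Proof.
rewrite part1; last exact: cle1.
rewrite supp1 cards0 subn0.
have -> : up set0 v = v.
  have hx : inX set0 v by move=> s; rewrite inE.
  by have [-> _] := @parab_uniq set0 v v one (esym (mulg1_ v)) hx (inW_one _).
have -> : (set0 == supp v :\: Des v) || `[< one = v >] = (supp v \subset Des v).
  rewrite eq_sym setD_eq0; case: (boolP `[< one = v >]); rewrite ?orbF // => /asboolP <-.
  by rewrite supp1 sub0set.
congr (if _ then _ else _).
apply/idP/asboolP.
  move=> h; split.
    exists (map prodw (allw (len v))) => w hw.
    case: (inW_red hw) => ws [ew [rw aw]].
    apply/List.in_map_iff; exists ws; split => //; apply/In_mem; apply: allw_mem.
    by rewrite -(len_reduced rw) ew; apply: bru_len; apply: (w0_bru h).
  split; first exact: inW_supp.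
  by move=> y hy; apply: bru_len; apply: (w0_bru h).
move=> [_ [hv hmax]]; apply/subsetP => s hs; rewrite inDes.
have := hmax (v ** gen s) (inW_mul hv (inW_gen hs)).
case: (len_mulg_gen v s) => e; lia.
Qed.

End Cox.

Local Open Scope ring_scope.

Theorem theorem3 (T : finType) (W : group) (gen : T -> W) :
  coxeter_system gen ->
  (forall u v : W, cox_le gen u v ->
     mobius gen u v =
       (if (supp gen u == supp gen v :\: Des gen (comp_up gen (supp gen u) v))
           || `[< u = v >]
        then (-1) ^+ (#|supp gen v| - #|supp gen u|)%N
        else 0))
  /\
  (forall v : W,
     mobius gen (gone W) v =
       (if `[< finite_parab gen (supp gen v) /\ is_w0 gen (supp gen v) v >]
        then (-1) ^+ #|supp gen v|
        else 0)).
Proof.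
move=> cox; split.
  by move=> u v c; exact: (part1 cox c).
by move=> v; exact: (part2 cox v).
Qed.
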